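(* Let $G$ be a group having a finite normal subgroup $F$ such that $G/F$ is a finitely generated abelian group. If for some prime $p$ the group $G$ is residually $\mathcal{F}_p$, then $G$ is conjugacy $\mathcal{F}_p$-separable.
   Context: $\mathcal{F}_p$ denotes the class of all finite $p$-groups. $G$ is residually $\mathcal{F}_p$ if for every non-identity $a\in G$ there is a homomorphism $\varphi$ of $G$ onto a finite $p$-group with $a\varphi\neq 1$. $G$ is conjugacy $\mathcal{F}_p$-separable if whenever $a,b\in G$ are not conjugate in $G$, there is a homomorphism $\varphi$ of $G$ onto a finite $p$-group $X$ such that $a\varphi$ and $b\varphi$ are not conjugate in $X$. *)

(* Defs.v *)
From HB Require Import structures.
From mathcomp Require Import all_boot all_fingroup all_solvable.
Set Implicit Arguments. Unset Strict Implicit. Unset Printing Implicit Defensive.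

Local Open Scope group_scope.

Definition is_hom (G H : groupType) (f : G -> H) : Prop :=
  forall x y : G, f (x * y) = f x * f y.

Definition hom_onto_pgroup (p : nat) (G : groupType) (gT : finGroupType)
    (phi : G -> gT) : Prop :=
  [/\ is_hom phi, (forall y : gT, exists x : G, phi x = y)
    & p.-group [set: gT]].

Definition residually_Fp (p : nat) (G : groupType) : Prop :=
  forall a : G, a != 1 ->
    exists (gT : finGroupType) (phi : G -> gT),
      hom_onto_pgroup p phi /\ phi a != 1.

Definition conj_in (G : groupType) (a b : G) : Prop :=
  exists g : G, a ^ g = b.

Definition conj_Fp_separable (p : nat) (G : groupType) : Prop :=
  forall a b : G, ~ conj_in a b ->
    exists (gT : finGroupType) (phi : G -> gT),
      hom_onto_pgroup p phi /\ ~ conj_in (phi a) (phi b).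

Definition is_subgroup (G : groupType) (F : pred G) : Prop :=
  [/\ F 1, (forall x y, F x -> F y -> F (x * y)) & (forall x, F x -> F x^-1)].

Definition is_normal_subgroup (G : groupType) (F : pred G) : Prop :=
  is_subgroup F /\ forall x g : G, F x -> F (x ^ g).

Definition is_finite_set (G : groupType) (F : pred G) : Prop :=
  exists s : seq G, forall x, F x -> x \in s.

Inductive gen_by (G : groupType) (S : G -> Prop) : G -> Prop :=
| gen_el x : S x -> gen_by S x
| gen_one : gen_by S 1
| gen_mul x y : gen_by S x -> gen_by S y -> gen_by S (x * y)
| gen_inv x : gen_by S x -> gen_by S x^-1.

(* G/F is abelian (F normal): all commutators lie in F *)
Definition quotient_abelian (G : groupType) (F : pred G) : Prop :=
  forall x y : G, F [~ x, y].

(* G/F is finitely generated: finitely many cosets s_i F generate G/F,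
   i.e. G is generated by the s_i together with F *)
Definition quotient_fin_gen (G : groupType) (F : pred G) : Prop :=
  exists s : seq G, forall g : G, gen_by (fun x => x \in s \/ F x) g.

(* Main.v *)
Require Import Defs.
From mathcomp Require Import all_boot all_fingroup all_solvable all_algebra.
From Stdlib Require Import ClassicalEpsilon.
Set Implicit Arguments. Unset Strict Implicit. Unset Printing Implicit Defensive.
Local Open Scope group_scope.

Section Hom.
Variables (G H : groupType) (f : G -> H) (hf : is_hom f).
Lemma hom1 : f 1 = 1.
Proof. by apply: (@mulgI _ (f 1)); rewrite -hf !mulg1. Qed.
Lemma homV x : f x^-1 = (f x)^-1.
Proof. by apply/esym/mulg1_eq; rewrite -hf mulgV hom1. Qed.
Lemma homJ x y : f (x ^ y) = f x ^ f y.
Proof. by rewrite /conjg !hf homV. Qed.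
Lemma homR x y : f [~ x, y] = [~ f x, f y].
Proof. by rewrite /commg hf homV homJ. Qed.
End Hom.

Section Combine.
Variables (p : nat) (G : groupType) (gT1 gT2 : finGroupType)
  (phi1 : G -> gT1) (phi2 : G -> gT2).
Hypotheses (h1 : hom_onto_pgroup p phi1) (h2 : hom_onto_pgroup p phi2).

Definition Phi (x : G) : (gT1 * gT2)%type := (phi1 x, phi2 x).
Definition inimg (z : (gT1 * gT2)%type) : bool :=
  if excluded_middle_informative (exists x, Phi x = z) then true else false.
Lemma inimgP z : reflect (exists x, Phi x = z) (inimg z).
Proof.
rewrite /inimg; case: excluded_middle_informative => E; constructor => //.
Qed.
Definition Hset := [set z | inimg z].
Lemma PhiM x y : Phi (x * y) = Phi x * Phi y.
Proof.
case: h1 => hm1 _ _; case: h2 => hm2 _ _.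
by rewrite /Phi hm1 hm2.
Qed.
Lemma Hgroup : group_set Hset.
Proof.
apply/group_setP; split.
  rewrite inE; apply/inimgP; exists 1.
  case: h1 => hm1 _ _; case: h2 => hm2 _ _.
  by rewrite /Phi (hom1 hm1) (hom1 hm2).
move=> u v; rewrite !inE => /inimgP[x <-] /inimgP[y <-].
by apply/inimgP; exists (x * y); rewrite PhiM.
Qed.
Canonical Hg := Group Hgroup.
Lemma PhiH x : Phi x \in Hg.
Proof. by rewrite inE; apply/inimgP; exists x. Qed.
Definition phi12 (x : G) : subg_of Hg := subg Hg (Phi x).

Lemma phi12_hom : hom_onto_pgroup p phi12.
Proof.
split.
- by move=> x y; rewrite /phi12 PhiM subgM ?PhiH.
- move=> u; have := subgP u; rewrite inE => /inimgP[x Ex].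
  by exists x; rewrite /phi12 Ex sgvalK.
- case: h1 => _ _ p1; case: h2 => _ _ p2.
  rewrite pgroupE cardsT card_sub.
  have : p.-group [set: (gT1 * gT2)%type].
    by rewrite pgroupE cardsT card_prod pnatM -!cardsT -!pgroupE p1 p2.
  move/(pgroupS (subsetT Hg)); rewrite pgroupE.
  by congr (_.-nat _); apply: eq_card => z; rewrite inE.
Qed.

Lemma phi12_eq x y : phi12 x = phi12 y <-> phi1 x = phi1 y /\ phi2 x = phi2 y.
Proof.
split.
  move/(congr1 val); rewrite /phi12 !subgK ?PhiH //.
  by case.
by case=> e1 e2; rewrite /phi12 /Phi e1 e2.
Qed.
End Combine.

Lemma triv_hom p (G : groupType) : exists (gT : finGroupType) (phi : G -> gT),
  hom_onto_pgroup p phi.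
Proof.
exists ('I_1 : finGroupType), (fun _ => 1); split.
- by move=> x y; rewrite mulg1.
- by move=> y; exists 1; rewrite (ord1 y).
- by rewrite pgroupE cardsT card_ord.
Qed.

Lemma sep_list p (G : groupType) : residually_Fp p G ->
  forall l : seq (G * G), (forall pr, pr \in l -> pr.1 != pr.2) ->
  exists (gT : finGroupType) (phi : G -> gT),
    hom_onto_pgroup p phi /\ forall pr, pr \in l -> phi pr.1 != phi pr.2.
Proof.
move=> hres; elim=> [|[x z] l IH] hl.
  by have [gT [phi hphi]] := triv_hom p G; exists gT, phi; split.
have [|gT [phi [hphi hsep]]] := IH.
  by move=> pr hpr; apply: hl; rewrite inE hpr orbT.
have xz : x^-1 * z != 1.
  by rewrite mulg_eq1 eqg_inv; apply: (hl (x, z)); rewrite inE eqxx.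
have [gT' [phi' [hphi' hne]]] := hres _ xz.
exists (subg_of (Hg hphi hphi')), (phi12 hphi hphi'); split.
  exact: phi12_hom.
move=> pr; rewrite inE => /orP[/eqP -> /=|hpr].
  apply/eqP => /phi12_eq[_ e]; move/eqP: hne; apply.
  by case: hphi' => hm _ _; rewrite hm homV // e mulVg.
apply/eqP => /phi12_eq[e _]; move/eqP: (hsep _ hpr); exact.
Qed.

Import Defs.
Theorem proposition4 (G : groupType) (F : pred G) :
  is_normal_subgroup F -> is_finite_set F ->
  quotient_abelian F -> quotient_fin_gen F ->
  forall p : nat, prime p ->
  residually_Fp p G -> conj_Fp_separable p G.
Proof.
move=> _ [s hs] hab _ p _ hres a b nconj.
pose l0 : seq (G * G) := [seq (x, 1) | x <- s & x != 1].
have hl0 : forall pr, pr \in l0 -> pr.1 != pr.2.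
  by move=> pr /mapP[x]; rewrite mem_filter => /andP[hx _] ->.
have [gP [psi [hpsi hpsiF]]] := sep_list hres hl0.
have psihom : is_hom psi by case: hpsi.
have kerF x : F x -> psi x = 1 -> x = 1.
  move=> Fx e; apply/eqP; apply/negPn/negP => nx.
  have hx : (x, 1) \in l0.
    by apply/mapP; exists x; rewrite // mem_filter nx hs.
  by move: (hpsiF _ hx); rewrite /= e (hom1 psihom) eqxx.
have central t n : psi n = 1 -> a ^ (t * n) = a ^ t.
  move=> e; rewrite conjgM; apply/conjg_fixP/eqP/kerF; first exact: hab.
  by rewrite homR // e commg1.
have [l [hl hL]] : exists l : seq (G * G), (forall pr, pr \in l -> pr.1 != pr.2)
    /\ forall y : gP, exists t, psi t = y /\ (a ^ t, b) \in l.
  suff : forall L : seq gP, exists l : seq (G * G),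
      (forall pr, pr \in l -> pr.1 != pr.2)
      /\ forall y, y \in L -> exists t, psi t = y /\ (a ^ t, b) \in l.
    case/(_ (enum gP)) => l [hl hL]; exists l; split => // y.
    by apply: hL; rewrite mem_enum.
  elim=> [|y L [l [hl hL]]]; first by exists [::].
  case: hpsi => _ hsurj _; have [t et] := hsurj y.
  exists ((a ^ t, b) :: l); split.
    move=> pr; rewrite inE => /orP[/eqP -> /=|]; last exact: hl.
    by apply/eqP => e; apply: nconj; exists t.
  move=> z; rewrite inE => /orP[/eqP ->|hz].
    by exists t; rewrite et inE eqxx.
  have [t' [e' h']] := hL z hz; exists t'; split => //.
  by rewrite inE h' orbT.
have [gC [chi [hchi hchil]]] := sep_list hres hl.
exists (subg_of (Hg hpsi hchi)), (phi12 hpsi hchi); split.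
  exact: phi12_hom.
have hh := phi12_hom hpsi hchi.
case: (hh) => hm hsurj _.
move=> [h eh]; have [g eg] := hsurj h.
rewrite -eg -homJ // in eh.
case/phi12_eq: eh => _ ec.
have [t [et ht]] := hL (psi g).
have en : psi (t^-1 * g) = 1.
  by rewrite psihom homV // et mulVg.
move/eqP: (hchil _ ht); apply => /=.
by rewrite -(central t _ en) mulKVg.
Qed.
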